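(* Let $\lambda,\epsilon>0$ be constants with $\lambda+\epsilon<1$. Consider CVRP instances in an arbitrary metric space $(X,\delta)$, with a depot $O\in X$, a set $V\subseteq X$ of $n$ customers and capacity $k=k(n)$, where $k(n)\to\infty$ as $n\to\infty$. Then for all sufficiently large $n$ there exists a set $U\subseteq V$ with $|U|>(\lambda+\frac{\epsilon}{2})n$ such that $$\mathrm{OPT}\ \ge\ \mathrm{rad}+(1-\lambda-\epsilon)\sum_{x\in U}\delta\big(x,U\setminus\{x\}\big).$$
   Context: $\mathrm{OPT}$ is the minimum total cost of a collection of tours, each starting and ending at $O$ and visiting at most $k$ points of $V$, that together visit every point of $V$; the cost of a tour is the sum of $\delta$-distances between consecutive points. $\ell(x)=\delta(O,x)$ and $\mathrm{rad}=\frac{2}{k}\sum_{x\in V}\ell(x)$. For a point $x$ and a set $A$, $\delta(x,A)=\min_{a\in A}\delta(x,a)$ (with $\delta(x,\emptyset)=0$). *)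

(* Defs.v *)
From HB Require Import structures.
From mathcomp Require Import all_boot all_order all_algebra.
From mathcomp Require Import classical_sets reals.
Set Implicit Arguments. Unset Strict Implicit. Unset Printing Implicit Defensive.
Import Order.TTheory GRing.Theory Num.Theory.
Local Open Scope ring_scope.
Local Open Scope classical_set_scope.

Section CVRP.
Variables (R : realType) (X : Type) (d : X -> X -> R).

Definition is_metric : Prop :=
  (forall x y, 0 <= d x y) /\ (forall x, d x x = 0) /\
  (forall x y, d x y = 0 -> x = y) /\ (forall x y, d x y = d y x) /\
  (forall x y z, d x z <= d x y + d y z).

Fixpoint path_len (x : X) (s : seq X) : R :=
  match s with [::] => 0 | y :: s' => d x y + path_len y s' end.

Variables (n : nat) (O : X) (p : 'I_n -> X).
(* customers are p 0, ..., p (n-1) (p injective), V = image of p *)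

Definition tour_cost (t : seq 'I_n) : R := path_len O (rcons (map p t) O).

Definition feasible (k : nat) (T : seq (seq 'I_n)) : Prop :=
  (forall t, t \in T -> (size t <= k)%N) /\
  (forall i : 'I_n, exists2 t, t \in T & i \in t).

Definition sol_cost (T : seq (seq 'I_n)) : R := \sum_(t <- T) tour_cost t.

Definition OPT (k : nat) : R :=
  inf [set c | exists T, feasible k T /\ c = sol_cost T].

Definition cvrp_rad (k : nat) : R := 2 / k%:R * \sum_(i < n) d O (p i).

(* d(p i, {p j | j in A}) = min, with value 0 for the empty set *)
Definition dist_set (i : 'I_n) (A : {set 'I_n}) : R :=
  match [seq d (p i) (p j) | j <- enum A] with
  | [::] => 0
  | a :: s => foldr Num.min a s
  end.

End CVRP.

(* Main.v *)
Require Import Defs.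
From HB Require Import structures.
From mathcomp Require Import all_boot all_order all_algebra.
From mathcomp Require Import classical_sets reals.
From mathcomp Require Import ring lra zify.
Import Order.TTheory GRing.Theory Num.Theory.
Local Open Scope ring_scope.

Set Implicit Arguments. Unset Strict Implicit.

Section Paths.
Variables (R : realType) (X : Type) (d : X -> X -> R).
Hypothesis hm : is_metric d.

Lemma d_ge0 x y : 0 <= d x y. Proof. by case: hm. Qed.
Lemma d_sym x y : d x y = d y x. Proof. by case: hm => _ [_ [_ [h _]]]. Qed.
Lemma d_tri x y z : d x z <= d x y + d y z. Proof. by case: hm => _ [_ [_ [_ h]]]. Qed.

Lemma path_ge0 x s : 0 <= path_len d x s.
Proof. elim: s x => [|y s IH] x /=; first by []. by rewrite addr_ge0 // d_ge0. Qed.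

Lemma path_cat x s1 s2 :
  path_len d x (s1 ++ s2) = path_len d x s1 + path_len d (last x s1) s2.
Proof. elim: s1 x => [|y s IH] x /=; first by rewrite add0r. by rewrite IH addrA. Qed.

Lemma path_rcons x s z : path_len d x (rcons s z) = path_len d x s + d (last x s) z.
Proof. by rewrite -cats1 path_cat /= addr0. Qed.

Lemma path_tri x a s : path_len d x s <= d x a + path_len d a s.
Proof.
case: s => [|y s] /=; first by rewrite addr0 d_ge0.
by rewrite addrA lerD2r d_tri.
Qed.

Lemma path_end_tri x s y z :
  path_len d x (rcons s z) <= path_len d x (rcons s y) + d y z.
Proof. by rewrite !path_rcons -addrA lerD2l d_tri. Qed.

Lemma path_mem x s z : List.In z s -> d x z <= path_len d x s.
Proof.
elim: s x => [|y s IH] x //= [<-|hz].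
  by rewrite lerDl path_ge0.
apply: le_trans (d_tri x y z) _; by rewrite lerD2l IH.
Qed.

Lemma path_last x s : d x (last x s) <= path_len d x s.
Proof.
elim: s x => [|y s IH] x /=; first by rewrite (proj1 (proj2 hm)).
apply: le_trans (d_tri x y _) _; by rewrite lerD2l IH.
Qed.

Lemma path_last_mem x s z : List.In z s -> d z (last x s) <= path_len d x s.
Proof.
elim: s x => [|y s IH] x //= [<-|hz].
  by apply: le_trans (path_last _ _) _; rewrite lerDr d_ge0.
by apply: le_trans (IH _ hz) _; rewrite lerDr d_ge0.
Qed.

Lemma path_two x s z : List.In z s -> d x z + d z (last x s) <= path_len d x s.
Proof.
elim: s x => [|y s IH] x //= [<-|hz].
  by rewrite lerD2l path_last.
apply: le_trans (_ : d x y + (d y z + d z (last y s)) <= _); last by rewrite lerD2l IH.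
by rewrite addrA lerD2r d_tri.
Qed.

Lemma path_mask x s m y :
  path_len d x (rcons (mask m s) y) <= path_len d x (rcons s y).
Proof.
elim: s x m => [|a s IH] x [|b m] //=.
- by rewrite addr0; have := path_last x (a :: rcons s y); rewrite /= last_rcons.
- case: b => /=; first by rewrite lerD2l IH.
  apply: le_trans (path_tri x a _) _; by rewrite lerD2l IH.
Qed.

End Paths.

Section Tours.
Variables (R : realType) (X : Type) (d : X -> X -> R).
Hypothesis hm : is_metric d.
Variables (n : nat) (O : X) (p : 'I_n -> X).

Lemma In_map (i : 'I_n) t : i \in t -> List.In (p i) (map p t).
Proof. elim: t => [|a t IH] //=; rewrite inE => /orP [/eqP ->|/IH]; by [left|right]. Qed.

Lemma flatten_bound ts :
  path_len d O (rcons (map p (flatten ts)) O) <= \sum_(t <- ts) tour_cost d O p t.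
Proof.
elim: ts => [|t ts IH] /=; first by rewrite big_nil /= (proj1 (proj2 hm)) addr0.
rewrite big_cons map_cat rcons_cat path_cat.
rewrite {1}/tour_cost (path_rcons _ _ (map p t)) -addrA lerD2l.
apply: le_trans (path_tri hm _ O _) _; by rewrite lerD2l.
Qed.

Lemma tour_mask m t : tour_cost d O p (mask m t) <= tour_cost d O p t.
Proof. by rewrite /tour_cost map_mask path_mask. Qed.

Lemma tour_2l (i : 'I_n) t : i \in t -> 2 * d O (p i) <= tour_cost d O p t.
Proof.
move=> hi; have := @path_two _ _ _ hm O (rcons (map p t) O) (p i).
rewrite last_rcons (d_sym hm (p i) O) -mulr2n mulr_natl; apply.
rewrite -cats1; apply List.in_or_app; left; exact: In_map.
Qed.

Lemma sum_le_const (I : Type) (s : seq I) (F : I -> R) a :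
  (forall i, List.In i s -> F i <= a) -> \sum_(i <- s) F i <= (size s)%:R * a.
Proof.
elim: s => [|x s IH] h; first by rewrite big_nil mul0r.
rewrite big_cons /= -addn1 natrD mulrDl mul1r addrC lerD //.
  by apply: IH => i hi; apply: h; right.
by apply: h; left.
Qed.

Lemma foldr_min_le (a : R) s x : x \in a :: s -> foldr Num.min a s <= x.
Proof.
elim: s x => [|b s IH] x /=; first by rewrite inE => /eqP ->.
rewrite !inE => /or3P [/eqP ->|/eqP ->|hx].
- by rewrite ge_min (IH a (mem_head _ _)) orbT.
- by rewrite ge_min lexx.
- by rewrite ge_min (IH x) ?inE ?hx ?orbT.
Qed.

Lemma dist_set_le (i j : 'I_n) (A : {set 'I_n}) :
  j \in A -> dist_set d p i A <= d (p i) (p j).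
Proof.
move=> hj; rewrite /dist_set.
have : d (p i) (p j) \in [seq d (p i) (p j0) | j0 <- enum A].
  by apply: map_f; rewrite mem_enum.
case: [seq _ | _ <- _] => [|a s] //; exact: foldr_min_le.
Qed.

Variable U : {set 'I_n}.
Let D i := dist_set d p i (U :\ i).
Let e : rel 'I_n := fun i j => [&& i \in U, j \in U & i != j].

Lemma D_le i j : e i j -> D i <= d (p i) (p j).
Proof.
case/and3P => hi hj hij; apply: dist_set_le; by rewrite !inE eq_sym hij.
Qed.

Lemma chain_fwd a l b : path e a (rcons l b) ->
  \sum_(i <- a :: l) D i <= path_len d (p a) (map p (rcons l b)).
Proof.
elim: l a => [|a' l IH] a /=.
  by rewrite big_cons big_nil !addr0 andbT; apply: D_le.
case/andP => h1 h2; rewrite big_cons lerD //; first exact: D_le.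
exact: IH.
Qed.

Lemma chain_bwd b l : path e b l ->
  \sum_(i <- l) D i <= path_len d (p b) (map p l).
Proof.
elim: l b => [|a l IH] b /=; first by rewrite big_nil.
case/andP => h1 h2; rewrite big_cons lerD //; last exact: IH.
rewrite d_sym //; apply: D_le; move: h1; rewrite /e => /and3P [-> -> ?].
by rewrite eq_sym.
Qed.

Lemma uniq_path x s : uniq (x :: s) -> all (mem U) (x :: s) -> path e x s.
Proof.
elim: s x => [|y s IH] x //=.
rewrite !inE negb_or => /andP [/andP [hxy hxs]] /andP [hys us] /and3P [hx hy hs].
rewrite /e hx hy hxy /=; apply: IH; by rewrite /= ?hys ?us ?hy ?hs.
Qed.

End Tours.

Section Win.
Variables (R : realType) (X : Type) (d : X -> X -> R).
Hypothesis hm : is_metric d.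
Variables (n : nat) (O : X) (p : 'I_n -> X).

Lemma aux (s g dd P' : R) : 0 < s -> 0 <= g -> 0 <= dd -> s * g <= P' ->
  dd + P' < (s+1)*dd -> (s+1) * g <= dd + P'.
Proof. move=> *. nra. Qed.

Lemma split_gap w W' : W' != [::] -> exists a1 l1 a2 l2,
  w :: W' = (a1 :: l1) ++ (a2 :: l2) /\
  (size W')%:R * d (p (last a1 l1)) (p a2) <= path_len d (p w) (map p W').
Proof.
elim: W' w => [|a W'' IH] w // _.
case: W'' IH => [|b W3] IH.
  by exists w, [::], a, [::]; rewrite /= addr0 mul1r.
have [a1 [l1 [a2 [l2 [E h]]]]] := IH a isT.
set s' := size (b :: W3) in h *.
set P' := path_len d (p a) (map p (b :: W3)) in h *.
have dge := d_ge0 hm (p w) (p a).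
have gge := d_ge0 hm (p (last a1 l1)) (p a2).
have s'gt : 0 < s'%:R :> R by rewrite ltr0n.
have hs : (size (a :: b :: W3))%:R = s'%:R + 1 :> R by rewrite /s' /= -addn1 natrD.
have hP : path_len d (p w) (map p (a :: b :: W3)) = d (p w) (p a) + P' by [].
case: (leP ((s'%:R + 1) * d (p w) (p a)) (d (p w) (p a) + P')) => hc.
  by exists w, [::], a, (b :: W3); rewrite hs hP.
exists w, (a1 :: l1), a2, l2; split; first by rewrite E.
rewrite hs hP; exact: aux.
Qed.

Variable U : {set 'I_n}.
Let D i := dist_set d p i (U :\ i).
Let e : rel 'I_n := fun i j => [&& i \in U, j \in U & i != j].

Lemma window_bound w W' : W' != [::] -> path e w W' ->
  exists g, [/\ 0 <= g, (size W')%:R * g <= path_len d (p w) (map p W') &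
    \sum_(i <- w :: W') D i <= path_len d (p w) (map p W') + g].
Proof.
move=> hne hp.
have [a1 [l1 [a2 [l2 [E h]]]]] := split_gap w hne.
exists (d (p (last a1 l1)) (p a2)); split => //; first exact: d_ge0.
case: E hp => -> ->; rewrite cat_path => /andP [h1 h2].
have hf : path e a1 (rcons l1 a2).
  by rewrite rcons_path h1; case/andP: h2.
rewrite -cat_cons big_cat /=.
apply: le_trans (lerD (chain_fwd d p hf) (chain_bwd hm p h2)) _.
rewrite map_cat path_cat map_rcons path_rcons last_map.
by rewrite addrAC.
Qed.

End Win.

Lemma auxG (R : realType) (K q r x y sp SA SW SB : R) : 0 < K -> 0 <= q -> 0 <= x -> 0 <= y -> 0 <= sp ->
  2 * q + r <= K -> SA <= q * x -> SB <= q * y -> SW <= r * ((x + sp + y) / 2) ->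
  (1 - r / K) * sp <= (x + sp + y) - 2 / K * (SA + SW + SB).
Proof.
move=> K0 q0 x0 y0 s0 hk hA hB hW.
have iK0 : 0 < K^-1 by rewrite invr_gt0.
have h1 : 2 / K * (SA + SW + SB) <= 2 / K * (q * x + r * ((x + sp + y) / 2) + q * y).
  by rewrite ler_wpM2l ?divr_ge0 ?(ltW K0) //; lra.
have h2 : 0 <= K^-1 * ((K - 2 * q - r) * (x + y)).
  apply: mulr_ge0; first exact: ltW. apply: mulr_ge0; lra.
apply: le_trans _ (lerB (lexx _) h1).
have e : x + sp + y - 2 / K * (q * x + r * ((x + sp + y) / 2) + q * y) - (1 - r / K) * sp
   = K^-1 * ((K - 2 * q - r) * (x + y)).
  by field; rewrite gt_eqF.
by rewrite -subr_ge0 e.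
Qed.

Lemma In_mem (T : eqType) (i : T) s : List.In i s -> i \in s.
Proof. elim: s => [|a s IH] //= [->|/IH h]; by rewrite inE ?eqxx ?h ?orbT. Qed.

Section TourG.
Variables (R : realType) (X : Type) (d : X -> X -> R).
Hypothesis hm : is_metric d.
Variables (n : nat) (O : X) (p : 'I_n -> X).
Let l i := d O (p i).

Lemma half_bound t i : List.In i t -> l i <= tour_cost d O p t / 2.
Proof.
move=> /In_mem hi; have := tour_2l hm O p hi.
rewrite /l; move=> h; rewrite ler_pdivlMr //; lra.
Qed.

Lemma small_G (k : nat) t : (0 < k)%N ->
  2 / k%:R * \sum_(i <- t) l i <= (size t)%:R / k%:R * tour_cost d O p t.
Proof.
move=> k0; have := sum_le_const (@half_bound t).
set S := \sum_(_ <- _) _; set C := tour_cost _ _ _ _ => h.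
have kp : 0 < k%:R :> R by rewrite ltr0n.
apply: le_trans (_ : 2 / k%:R * ((size t)%:R * (C / 2)) <= _).
  by rewrite ler_wpM2l // divr_ge0 // ltW.
rewrite le_eqVlt; apply/orP; left; apply/eqP; field; by rewrite gt_eqF.
Qed.

Lemma window_G (k : nat) t A w W' B : t = A ++ w :: W' ++ B -> size A = size B ->
  (2 * size A + (size W').+1 <= k)%N -> (0 < k)%N ->
  (1 - (size W').+1%:R / k%:R) * path_len d (p w) (map p W')
    <= tour_cost d O p t - 2 / k%:R * \sum_(i <- t) l i.
Proof.
move=> -> hAB hk k0.
set x := path_len d O (rcons (map p A) (p w)).
set sp := path_len d (p w) (map p W').
set y := path_len d (p (last w W')) (rcons (map p B) O).
have hC : tour_cost d O p (A ++ w :: W' ++ B) = x + sp + y.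
  rewrite /tour_cost map_cat rcons_cat /= map_cat rcons_cat path_cat /=.
  rewrite path_cat /x /sp /y !path_rcons last_map; lra.
have hx0 : 0 <= x by exact: path_ge0.
have hy0 : 0 <= y by exact: path_ge0.
have hs0 : 0 <= sp by exact: path_ge0.
have kp : 0 < k%:R :> R by rewrite ltr0n.
rewrite hC -cat_cons !big_cat /= addrA.
apply: (@auxG _ _ (size A)%:R) => //.
- by rewrite -natrM -natrD ler_nat.
- apply: sum_le_const => i hi; apply: path_mem => //.
  rewrite -cats1; apply: List.in_or_app; left; exact: List.in_map.
- rewrite hAB; apply: sum_le_const => i hi; rewrite /l d_sym //.
  have -> : O = last (p (last w W')) (rcons (map p B) O) by rewrite last_rcons.
  apply: path_last_mem => //.
  rewrite -cats1; apply: List.in_or_app; left; exact: List.in_map.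
- rewrite -hC; apply: sum_le_const => i hi; apply: half_bound.
  apply: List.in_or_app; right; apply: (List.in_or_app (w :: W') B); by left.
Qed.

End TourG.

Fixpoint red n (seen : seq 'I_n) (T : seq (seq 'I_n)) : seq (seq 'I_n) :=
  match T with
  | [::] => [::]
  | t :: T' => let t' := undup [seq i <- t | i \notin seen] in
               t' :: red (seen ++ t') T'
  end.

Lemma red_subseq n (seen : seq 'I_n) t :
  subseq (undup [seq i <- t | i \notin seen]) t.
Proof. exact: subseq_trans (undup_subseq _) (filter_subseq _ _). Qed.

Lemma red_uniq n T (seen : seq 'I_n) : uniq seen -> uniq (seen ++ flatten (red seen T)).
Proof.
elim: T seen => [|t T IH] seen /= us; first by rewrite cats0.
rewrite catA; apply: IH.
rewrite cat_uniq us undup_uniq andbT /=.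
apply/hasPn => i; rewrite mem_undup mem_filter; by case/andP.
Qed.

Lemma red_cover n T (seen : seq 'I_n) :
  {subset flatten T <= seen ++ flatten (red seen T)}.
Proof.
elim: T seen => [|t T IH] seen /= i //.
rewrite mem_cat => /orP [hi|hi].
  case hs: (i \in seen); first by rewrite mem_cat hs.
  by rewrite mem_cat /= mem_cat mem_undup mem_filter hs hi orbT.
by move: (IH (seen ++ undup [seq i <- t | i \notin seen]) i hi); rewrite -catA.
Qed.

Lemma red_size n T (seen : seq 'I_n) k :
  (forall t, t \in T -> (size t <= k)%N) -> forall t, t \in red seen T -> (size t <= k)%N.
Proof.
elim: T seen => [|t T IH] seen //= h t'; rewrite inE => /orP [/eqP ->|ht'].
  apply: leq_trans (size_subseq (red_subseq seen t)) _; apply: h; exact: mem_head.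
by apply: (IH _ _ t' ht') => t0 ht0; apply: h; rewrite inE ht0 orbT.
Qed.

Lemma red_cost (R : realType) (X : Type) (d : X -> X -> R) (hm : is_metric d) n O (p : 'I_n -> X) T seen :
  \sum_(t <- red seen T) tour_cost d O p t <= \sum_(t <- T) tour_cost d O p t.
Proof.
elim: T seen => [|t T IH] seen /=; first by rewrite !big_nil.
rewrite !big_cons lerD //.
have /subseqP [m _ ->] := red_subseq seen t.
exact: tour_mask.
Qed.

Lemma fsub (T : eqType) (Ts : seq (seq T)) f :
  (forall t, subseq (f t) t) -> subseq (flatten (map f Ts)) (flatten Ts).
Proof. move=> h; elim: Ts => [|t Ts IH] //=; exact: cat_subseq. Qed.

Lemma filter_fsub (T : eqType) (Ts : seq (seq T)) P :
  subseq (flatten (filter P Ts)) (flatten Ts).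
Proof.
elim: Ts => [|t Ts IH] //=; case: (P t) => /=; first exact: cat_subseq.
apply: subseq_trans IH _; exact: suffix_subseq.
Qed.

Lemma uniq_flatten_mem (T : eqType) (s : seq (seq T)) t : uniq (flatten s) -> t \in s -> uniq t.
Proof.
elim: s => [|a s IH] //= u; rewrite inE => /orP [/eqP ->|h].
  by move: u; rewrite cat_uniq => /andP [].
by apply: IH h; move: u; rewrite cat_uniq => /and3P [].
Qed.

Lemma mem_flatten_map (T T' : eqType) (Ts : seq T') (f : T' -> seq T) t i :
  t \in Ts -> i \in f t -> i \in flatten (map f Ts).
Proof.
elim: Ts => [|a Ts IH] //=; rewrite inE mem_cat => /orP [/eqP <- -> //|ht hi].
by rewrite IH ?orbT.
Qed.

Lemma mem_flatten_filter (T : eqType) (Ts : seq (seq T)) P i :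
  i \in flatten (filter P Ts) -> exists2 t, t \in Ts & P t && (i \in t).
Proof.
elim: Ts => [|a Ts IH] //=; case hP: (P a) => /=.
  rewrite mem_cat => /orP [hi|/IH [t ht h]].
    by exists a; rewrite ?mem_head ?hP ?hi.
  by exists t; rewrite ?inE ?ht ?orbT.
by move/IH => [t ht h]; exists t; rewrite ?inE ?ht ?orbT.
Qed.

Lemma size_flattenR (R : realType) (T : Type) (s : seq (seq T)) :
  (size (flatten s))%:R = \sum_(t <- s) (size t)%:R :> R.
Proof. by rewrite size_flatten sumnE natr_sum big_map. Qed.

Lemma final_ar (R : realType) (c z sp g s D G : R) : 0 <= c -> 0 < s -> 0 <= g -> 0 <= sp ->
  s * g <= sp -> D <= sp + g -> c * (s + 1) <= s * z -> z * sp <= G -> c * D <= G.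
Proof.
move=> c0 s0 g0 sp0 hsg hD hc hz.
apply: le_trans (_ : c * (sp + g) <= _); first by rewrite ler_wpM2l.
rewrite -(ler_pM2l s0).
have h2 : c * (s * g) <= c * sp by rewrite ler_wpM2l.
have h3 : c * (s + 1) * sp <= s * z * sp by rewrite ler_wpM2r.
have h4 : s * z * sp <= s * G by rewrite -mulrA ler_wpM2l // ltW.
have e : s * (c * (sp + g)) = c * (s + 1) * sp + (c * (s * g) - c * sp) by ring.
rewrite e; lra.
Qed.

Lemma param_ar (R : realType) (lam eps K m r : R) : 0 < lam -> 0 < eps -> lam + eps < 1 ->
  0 < K -> m <= K -> (lam + eps) * K < m ->
  (lam + 3 * eps / 4) * m <= r -> r < (lam + 3 * eps / 4) * m + 2 ->
  16 / eps <= K -> 16 / eps <= (lam + 3 * eps / 4) * (lam + eps) * K ->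
  (1 - lam - eps) * r <= (r - 1) * (1 - r / K).
Proof.
move=> l0 e0 le1 K0 mK thm hr1 hr2 hK hK2.
set al := lam + 3 * eps / 4 in hr1 hr2 hK2.
have al0 : 0 < al by rewrite /al; lra.
have h16 : 16 <= K * eps by rewrite -ler_pdivrMr.
have h16' : 16 <= (al * (lam + eps) * K) * eps by rewrite -ler_pdivrMr.
have hrK : r / K <= al + 2 / K.
  rewrite ler_pdivrMr // mulrDl divfK ?gt_eqF //.
  have : al * m <= al * K by rewrite ler_pM2l.
  lra.
have h2K : 2 / K <= eps / 8.
  rewrite ler_pdivrMr //; lra.
have hr3 : 16 <= eps * (r - 1) + eps.
  have : al * ((lam + eps) * K) <= al * m by rewrite ler_pM2l // ltW.
  rewrite mulrA => h; nra.
have hz : 1 - lam - eps + eps / 8 <= 1 - r / K by rewrite /al in hrK; lra.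
have r1 : 0 <= r - 1.
  have : 1 <= eps * (r - 1) by nra.
  nra.
apply: le_trans (_ : (r - 1) * (1 - lam - eps + eps / 8) <= _); last first.
  by rewrite ler_wpM2l.
nra.
Qed.

Lemma natfacts (m q : nat) : (2 * q <= m)%N -> (m - q - (m - 2 * q) = q)%N /\ (2 * q + (m - 2 * q) = m)%N.
Proof. move=> h; split; lia. Qed.

Definition qf (R : realType) (al : R) (m : nat) : nat := Num.truncn ((1 - al) * m%:R / 2).
Definition win (R : realType) (al : R) n (t : seq 'I_n) :=
  take (size t - 2 * qf al (size t)) (drop (qf al (size t)) t).

Lemma win_subseq (R : realType) (al : R) n (t : seq 'I_n) : subseq (win al t) t.
Proof. exact: subseq_trans (take_subseq _ _) (drop_subseq _ _). Qed.

Lemma large_tour (R : realType) (X : Type) (d : X -> X -> R) (hm : is_metric d) (n : nat) (O : X)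
  (p : 'I_n -> X) (lam eps : R) (k : nat) (U : {set 'I_n}) (t : seq 'I_n) :
  0 < lam -> 0 < eps -> lam + eps < 1 -> (0 < k)%N ->
  16 / eps <= k%:R -> 16 / eps <= (lam + 3 * eps / 4) * (lam + eps) * k%:R ->
  (size t <= k)%N -> (lam + eps) * k%:R < (size t)%:R ->
  uniq (win (lam + 3 * eps / 4) t) -> all (mem U) (win (lam + 3 * eps / 4) t) ->
  (lam + 3 * eps / 4) * (size t)%:R <= (size (win (lam + 3 * eps / 4) t))%:R /\
  (1 - lam - eps) * \sum_(i <- win (lam + 3 * eps / 4) t) dist_set d p i (U :\ i)
    <= tour_cost d O p t - 2 / k%:R * \sum_(i <- t) d O (p i).
Proof.
move=> l0 e0 le1 k0 hK1 hK2 hsk hth uw aw.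
set al := lam + 3 * eps / 4 in hK2 uw aw *.
have al0 : 0 < al by rewrite /al; lra.
have al1 : al < 1 by rewrite /al; lra.
set m := size t in hsk hth *.
have Kp : 0 < k%:R :> R by rewrite ltr0n.
have mK : m%:R <= k%:R :> R by rewrite ler_nat.
set q := qf al m.
have hx0 : 0 <= (1 - al) * m%:R / 2 by rewrite divr_ge0 // mulr_ge0 //; lra.
have hq1 : q%:R <= (1 - al) * m%:R / 2 by rewrite /q /qf truncn_le.
have hq2 : (1 - al) * m%:R / 2 < q.+1%:R by rewrite /q /qf truncnS_gt.
have h2q : (2 * q <= m)%N.
  rewrite -(ler_nat R) natrM.
  have : (1 - al) * m%:R <= m%:R by rewrite ler_piMl //; lra.
  lra.
set r := (m - 2 * q)%N.
have hr : r%:R = m%:R - 2 * q%:R :> R by rewrite /r natrB // natrM.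
have hr1 : al * m%:R <= r%:R by rewrite hr; lra.
have hr2 : r%:R < al * m%:R + 2.
  rewrite hr; move: hq2; rewrite [q.+1%:R]mulrS; lra.
have sw : size (win al t) = r.
  rewrite /win -/m -/q size_takel // size_drop -/m.
  by apply: leq_sub2l; rewrite leq_pmull.
have [nf1 nf2] := natfacts h2q.
have qm : (q <= size t)%N by apply: leq_trans h2q; rewrite leq_pmull.
split; first by rewrite sw.
have r16 : 16 <= r%:R :> R.
  have e1 : 16 <= 16 / eps.
    rewrite ler_pdivlMr //; lra.
  have : al * ((lam + eps) * k%:R) <= al * m%:R by rewrite ler_pM2l // ltW.
  rewrite mulrA; lra.
have r2 : (2 <= r)%N by rewrite -(ler_nat R); lra.
have ht : t = take q t ++ (win al t ++ drop r (drop q t)).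
  by rewrite /win -/m -/q -/r !cat_take_drop.
move: sw uw aw ht; case: (win al t) => [|w W'] //= sw uw aw ht.
  by move: r2; rewrite -sw.
have hne : W' != [::] by case: W' sw {ht uw aw} => //= sw; move: r2; rewrite -sw.
have hp := uniq_path uw aw.
have [g [g0 hg hD]] := window_bound hm p hne hp.
have hAB : size (take q t) = size (drop r (drop q t)).
  by rewrite !size_drop size_takel // -/m /r nf1.
have hk : (2 * size (take q t) + (size W').+1 <= k)%N.
  by rewrite sw size_takel // /r nf2.
have := window_G hm O p ht hAB hk k0.
set sp := path_len _ _ _ => hG.
have sp0 : 0 <= sp by exact: path_ge0.
have rS : r%:R = (size W')%:R + 1 :> R by rewrite -sw -addn1 natrD.
have hpar := param_ar l0 e0 le1 Kp mK hth hr1 hr2 hK1 hK2.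
apply: (final_ar (z := 1 - (size W').+1%:R / k%:R) (sp := sp) (g := g) (s := (size W')%:R)) => //.
- lra.
- by rewrite ltr0n lt0n size_eq0.
- by move: hpar; rewrite sw rS addrK.
Qed.


Lemma small_chain (R : realType) (X : Type) (d : X -> X -> R) (hm : is_metric d) (n : nat) (O : X)
  (p : 'I_n -> X) (U : {set 'I_n}) (Ls : seq 'I_n) :
  (1 < size Ls)%N -> uniq Ls -> all (mem U) Ls ->
  \sum_(i <- Ls) dist_set d p i (U :\ i) <= path_len d O (rcons (map p Ls) O).
Proof.
case: Ls => [|a [|a' tl]] //= _ u al.
have hp : path (fun i j => [&& i \in U, j \in U & i != j]) a (rcons (a' :: tl) a).
  rewrite rcons_path (uniq_path u al) /=.
  have hl : last a' tl \in a' :: tl by exact: mem_last.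
  have hU : forall i, i \in [:: a, a' & tl] -> i \in U by apply/allP.
  apply/and3P; split; first by apply: hU; rewrite inE hl orbT.
    by apply: hU; rewrite mem_head.
  by apply/eqP => ha; move: u; rewrite /= -ha hl.
apply: le_trans (chain_fwd d p hp) _.
rewrite map_rcons; apply: le_trans (path_end_tri hm _ _ O _) _.
by rewrite addrC.
Qed.

Lemma key (R : realType) (X : Type) (d : X -> X -> R) (hm : is_metric d) (n : nat) (O : X)
  (p : 'I_n -> X) (lam eps : R) (k : nat) (Ts : seq (seq 'I_n)) :
  0 < lam -> 0 < eps -> lam + eps < 1 -> (0 < k)%N ->
  16 / eps <= k%:R -> 16 / eps <= (lam + 3 * eps / 4) * (lam + eps) * k%:R ->
  uniq (flatten Ts) -> (forall i, i \in flatten Ts) -> (forall t, t \in Ts -> (size t <= k)%N) ->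
  exists U : {set 'I_n},
    (lam + 3 * eps / 4) * n%:R - 1 <= #|U|%:R /\
    cvrp_rad d O p k + (1 - lam - eps) * \sum_(i in U) dist_set d p i (U :\ i)
      <= \sum_(t <- Ts) tour_cost d O p t.
Proof.
move=> l0 e0 le1 k0 hK1 hK2 uTs hcov hsz.
set al := lam + 3 * eps / 4 in hK2 *.
have al0 : 0 < al by rewrite /al; lra.
have al1 : al < 1 by rewrite /al; lra.
have Kp : 0 < k%:R :> R by rewrite ltr0n.
pose sm (t : seq 'I_n) := (size t)%:R <= (lam + eps) * k%:R.
pose Ls := flatten [seq t <- Ts | sm t].
pose b := (1 < size Ls)%N.
pose sel t := if sm t then (if b then t else [::]) else win al t.
pose L := flatten [seq sel t | t <- Ts].
have selsub : forall t, subseq (sel t) t.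
  move=> t; rewrite /sel; case: ifP => _; last exact: win_subseq.
  by case: ifP => _; rewrite ?subseq_refl ?sub0seq.
have uL : uniq L := subseq_uniq (fsub Ts selsub) uTs.
exists [set i in L].
set U := [set i in L].
have cardU : #|U| = size L by rewrite cardsE; apply/card_uniqP.
have inU : forall t i, t \in Ts -> i \in sel t -> i \in U.
  by move=> t i ht hi; rewrite inE; apply: (mem_flatten_map ht hi).
pose D i := dist_set d p i (U :\ i).
have sumU : \sum_(i in U) D i = \sum_(t <- Ts) \sum_(i <- sel t) D i.
  rewrite (eq_bigl (fun i => i \in L)); last by move=> i; rewrite inE.
  by rewrite -big_uniq // big_flatten big_map.
have uT : forall t, t \in Ts -> uniq t by move=> t; apply: uniq_flatten_mem.
have large : forall t, t \in Ts -> ~~ sm t ->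
    al * (size t)%:R <= (size (sel t))%:R /\
    (1 - lam - eps) * \sum_(i <- sel t) D i
      <= tour_cost d O p t - 2 / k%:R * \sum_(i <- t) d O (p i).
  move=> t ht hs; rewrite /sel (negbTE hs).
  apply: large_tour => //; first by apply: hsz.
  - by rewrite ltNge.
  - exact: subseq_uniq (win_subseq _ _) (uT t ht).
  - apply/allP => i hi; apply: (inU t) => //; by rewrite /sel (negbTE hs).
have radE : cvrp_rad d O p k = \sum_(t <- Ts) 2 / k%:R * \sum_(i <- t) d O (p i).
  rewrite /cvrp_rad -mulr_sumr -big_flatten /=; congr (_ * _).
  by rewrite [RHS]big_uniq //; apply: eq_bigl => i; rewrite hcov.
have nE : n%:R = \sum_(t <- Ts) (size t)%:R :> R.
  rewrite -size_flattenR; congr (_%:R).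
  rewrite -(card_uniqP uTs) -[LHS]card_ord; apply: eq_card => i; by rewrite hcov.
have hC0 : forall t, 0 <= tour_cost d O p t by move=> t; exact: path_ge0.
split.
- rewrite cardU /L size_flattenR big_map nE mulr_sumr.
  pose ex (t : seq 'I_n) : R := if sm t && ~~ b then (size t)%:R else 0.
  have per : forall t, t \in Ts -> al * (size t)%:R <= (size (sel t))%:R + ex t.
    move=> t ht; rewrite /ex; case hs: (sm t) => /=.
      rewrite /sel hs; case: ifP => hb /=.
        by rewrite addr0 ler_piMl // ltW.
      by rewrite add0r ler_piMl // ltW.
    by rewrite addr0; case: (large t ht); rewrite ?hs.
  have exs : \sum_(t <- Ts) ex t <= 1.
    rewrite /ex; case hb: b => /=.
      by rewrite big1 ?ler01 // => t _; rewrite andbF.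
    under eq_bigr => t _ do rewrite andbT.
    rewrite -big_mkcond /= -big_filter -size_flattenR -/Ls.
    by rewrite lern1 leqNgt; move: hb; rewrite /b => ->.
  have hs : \sum_(t <- Ts) al * (size t)%:R <= \sum_(t <- Ts) ((size (sel t))%:R + ex t).
    by rewrite [X in _ <= X]big_seq [X in X <= _]big_seq; apply: ler_sum => t; apply: per.
  move: hs; rewrite big_split /=; lra.
- rewrite radE sumU.
  pose Rt (t : seq 'I_n) := 2 / k%:R * \sum_(i <- t) d O (p i).
  pose Dt (t : seq 'I_n) := \sum_(i <- sel t) D i.
  pose C (t : seq 'I_n) := tour_cost d O p t.
  rewrite -/(Rt _) -/(Dt _) -/(C _).
  rewrite (bigID sm) (bigID sm (fun=> true) Dt) (bigID sm (fun=> true) C) /= mulrDr.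
  have c0 : 0 <= 1 - lam - eps by lra.
  have hL : \sum_(t <- Ts | ~~ sm t) Rt t + (1 - lam - eps) * \sum_(t <- Ts | ~~ sm t) Dt t
            <= \sum_(t <- Ts | ~~ sm t) C t.
    rewrite mulr_sumr -big_split /= big_seq_cond [X in _ <= X]big_seq_cond.
    apply: ler_sum => t /andP [ht hs]; have [_ h] := large t ht hs.
    rewrite /Rt /Dt /C; lra.
  have hR : \sum_(t <- Ts | sm t) Rt t <= (lam + eps) * \sum_(t <- Ts | sm t) C t.
    rewrite mulr_sumr; apply: ler_sum => t hs.
    apply: le_trans (small_G hm O p t k0) _.
    rewrite /C ler_wpM2r //; by rewrite ler_pdivrMr // mulrC.
  have hD : \sum_(t <- Ts | sm t) Dt t <= \sum_(t <- Ts | sm t) C t.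
    case hb: b.
      have e1 : \sum_(t <- Ts | sm t) Dt t = \sum_(i <- Ls) D i.
        rewrite /Ls big_flatten /= big_filter; apply: eq_bigr => t hs.
        by rewrite /Dt /sel hs hb.
      rewrite e1; apply: le_trans (small_chain hm O p (U := U) _ _ _) _.
      + exact: hb.
      + exact: subseq_uniq (filter_fsub Ts sm) uTs.
      + apply/allP => i /mem_flatten_filter [t ht /andP [hs hi]].
        by apply: (inU t) => //; rewrite /sel hs hb.
      + by rewrite -big_filter; exact: flatten_bound.
    rewrite big1; first by apply: sumr_ge0 => t _; exact: hC0.
    by move=> t hs; rewrite /Dt /sel hs hb big_nil.
  have hS : \sum_(t <- Ts | sm t) Rt t + (1 - lam - eps) * \sum_(t <- Ts | sm t) Dt t
            <= \sum_(t <- Ts | sm t) C t.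
    have := ler_wpM2l c0 hD; lra.
  lra.
Qed.

Unset Implicit Arguments. Set Strict Implicit.

Theorem theorem10 (R : realType) (lam eps : R) (k : nat -> nat) :
  0 < lam -> 0 < eps -> lam + eps < 1 ->
  (forall m : nat, exists N : nat, forall n : nat, (N <= n)%N -> (m <= k n)%N) ->
  exists N : nat, forall n : nat, (N <= n)%N ->
    forall (X : Type) (d : X -> X -> R), is_metric d ->
    forall (O : X) (p : 'I_n -> X), injective p ->
    exists U : {set 'I_n},
      (lam + eps / 2) * n%:R < #|U|%:R /\
      cvrp_rad d O p (k n) + (1 - lam - eps) * \sum_(i in U) dist_set d p i (U :\ i)
        <= OPT d O p (k n).
Proof.
move=> l0 e0 le1 hk.
set al := lam + 3 * eps / 4.
have al0 : 0 < al by rewrite /al; lra.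
have th0 : 0 < lam + eps by lra.
set M := 16 / eps / (al * (lam + eps)) + 16 / eps.
have hM1 : 0 <= 16 / eps / (al * (lam + eps)) by rewrite !divr_ge0 // ?ltW // mulr_gt0.
have hM2 : 0 <= 16 / eps by rewrite divr_ge0 // ltW.
have M0 : 0 <= M by rewrite /M addr_ge0.
have [N1 hN1] := hk (Num.truncn M).+1.
have h4 : 0 <= 4 / eps by rewrite divr_ge0 // ltW.
exists (maxn N1 (Num.truncn (4 / eps)).+1) => n hn X d hm O p _.
have hn1 : (N1 <= n)%N by apply: leq_trans hn; rewrite leq_maxl.
have hn2 : ((Num.truncn (4 / eps)).+1 <= n)%N by apply: leq_trans hn; rewrite leq_maxr.
have kK := hN1 n hn1.
have kM : M < (k n)%:R.
  apply: lt_le_trans (truncnS_gt M) _; by rewrite ler_nat.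
have k0 : (0 < k n)%N by apply: leq_trans kK.
have Kp : 0 < (k n)%:R :> R by rewrite ltr0n.
have hK1 : 16 / eps <= (k n)%:R by rewrite /M in kM; lra.
have hK2 : 16 / eps <= al * (lam + eps) * (k n)%:R.
  rewrite -ler_pdivrMl ?mulr_gt0 //; rewrite /M in kM.
  rewrite mulrC; lra.
have hnR : 4 / eps < n%:R.
  apply: lt_le_trans (truncnS_gt _) _; by rewrite ler_nat.
have hne : 4 < n%:R * eps by rewrite -ltr_pdivrMr.
set Pc := fun U : {set 'I_n} => (lam + eps / 2) * n%:R < #|U|%:R.
set F := fun U : {set 'I_n} =>
  cvrp_rad d O p (k n) + (1 - lam - eps) * \sum_(i in U) dist_set d p i (U :\ i).
have keyT : forall T, feasible (k n) T -> exists2 U, Pc U & F U <= sol_cost d O p T.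
  move=> T [hsz hcv].
  set Ts := red [::] T.
  have uTs : uniq (flatten Ts) by exact: (red_uniq T (seen := [::]) isT).
  have cTs : forall i, i \in flatten Ts.
    move=> i; have [t ht hi] := hcv i.
    have : i \in flatten T by apply/flattenP; exists t.
    by move/(@red_cover n T [::] i); rewrite cat0s.
  have sTs : forall t, t \in Ts -> (size t <= k n)%N by apply: red_size.
  have [U [hc hF]] := key hm O p l0 e0 le1 k0 hK1 hK2 uTs cTs sTs.
  exists U.
    rewrite /Pc; apply: lt_le_trans hc; rewrite /al; lra.
  apply: le_trans hF _; exact: red_cost.
have T0f : feasible (k n) [seq [:: i] | i <- enum 'I_n].
  split.
    by move=> t /mapP [i _ ->].
  by move=> i; exists [:: i]; rewrite ?mem_head //; apply: map_f; rewrite mem_enum.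
have [U0 hP0 _] := keyT _ T0f.
case: (arg_minP F hP0) => Um hPm hmin.
exists Um; split => //.
rewrite leNgt; apply/negP => hlt.
rewrite /OPT in hlt.
have [|y [T [hT ->]] hy] := inf_lt _ hlt.
  by exists (sol_cost d O p [seq [:: i] | i <- enum 'I_n]); exists [seq [:: i] | i <- enum 'I_n].
have [U hU hFU] := keyT T hT.
have := hmin U hU; rewrite /F in hFU * => hh; lra.
Qed.
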